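(* Let $\pi$ be a measure on $\mathcal Y$ (extended by zero to $\mathbb Z$). The following are equivalent: (1) $\pi$ is a stationary measure (resp. stationary distribution) of $Y_t$ on $\mathcal Y$. (2) $\pi$ is a non-negative measure (resp. probability distribution) on $\mathcal Y$ such that for every $x\in\mathbb N_0$, $$\sum_{\omega\in\Omega_-}\ \sum_{j=\omega\omega_*^{-1}+1}^{0}\lambda_\omega(x-j\omega_* )\pi(x-j\omega_* )=\sum_{\omega\in\Omega_+}\ \sum_{j=1}^{\omega\omega_*^{-1}}\lambda_\omega(x-j\omega_* )\pi(x-j\omega_* )<\infty .$$ (3) $\pi$ is a non-negative measure (resp. probability distribution) on $\mathcal Y$ such that for every $x\in\mathbb N_0$, $$\sum_{j=\omega_-+1}^{0}\pi(x-j\omega_* )\sum_{\omega\in A_j}\lambda_\omega(x-j\omega_* )=\sum_{j=1}^{\omega_+}\pi(x-j\omega_* )\sum_{\omega\in A_j}\lambda_\omega(x-j\omega_* )<\infty .$$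
   Context: Let $(Y_t)_{t\ge0}$ be a minimal continuous-time Markov chain on a state space $\mathcal Y\subseteq\mathbb N_0$ with transition rate matrix $Q=(q_{x,y})_{x,y\in\mathcal Y}$ with finite entries. Let $\Omega=\{y-x: q_{x,y}>0\text{ for some }x,y\in\mathcal Y\}$ and $\lambda_\omega(x)=q_{x,x+\omega}$ for $x\in\mathcal Y$, $\omega\in\Omega$. Convention: functions defined on $\mathcal Y$ (such as $\lambda_\omega$ and measures $\pi$) are set to $0$ at points of $\mathbb Z\setminus\mathcal Y$. Let $\Omega_+=\{\omega\in\Omega:\omega>0\}$, $\Omega_-=\{\omega\in\Omega:\omega<0\}$, $\omega_*=\gcd(\Omega)>0$, $\omega_+=\max_{\omega\in\Omega_+}\omega/\omega_*$, $\omega_-=\min_{\omega\in\Omega_-}\omega/\omega_*$ (with $\max\varnothing=-\infty$, $\min\varnothing=+\infty$, and max/min equal to $\pm\infty$ if unbounded). For integers $j$ with $\omega_-\le j\le\omega_++1$ let $A_j=\{\omega\in\Omega_-: j\omega_*>\omega\}$ if $j\le0$ and $A_j=\{\omega\in\Omega_+: j\omega_*\le\omega\}$ if $j\ge1$. A stationary measure of $Y_t$ is a non-negative measure $\pi$ on $\mathcal Y$ satisfying the master equation $0=\sum_{\omega\in\Omega}\lambda_\omega(x-\omega)\pi(x-\omega)-\sum_{\omega\in\Omega}\lambda_\omega(x)\pi(x)$ for all $x\in\mathcal Y$; a stationary distribution is a stationary measure that is a probability measure. *)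

(* Defs.v *)
From HB Require Import structures.
From mathcomp Require Import all_boot all_order all_algebra.
From mathcomp Require Import all_classical all_reals all_analysis.
Set Implicit Arguments. Unset Strict Implicit. Unset Printing Implicit Defensive.
Import Order.TTheory GRing.Theory Num.Theory.
Local Open Scope classical_set_scope.
Local Open Scope ring_scope.

Section Defs.
Variable R : realType.
(* State space Y ⊆ N0 ⊆ Z, rates q x y = q_{x,y} (only values on Y x Y matter). *)
Variables (Y : set int) (q : int -> int -> R).

Definition rate_matrix : Prop :=
  (forall x y, x \in Y -> y \in Y -> x != y -> 0 <= q x y) /\
  (forall x, x \in Y -> ((- q x x)%:E = \esum_(y in Y `\ x) (q x y)%:E)%E).

Definition Omega : set int :=
  [set w | exists x y, [/\ x \in Y, y \in Y, 0 < q x y & w = y - x]].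
Definition Omega_plus : set int := [set w | Omega w /\ 0 < w].
Definition Omega_minus : set int := [set w | Omega w /\ w < 0].

Definition is_gcd_set (S : set int) (d : int) : Prop :=
  0 <= d /\ (forall w, S w -> (d %| w)%Z) /\
  (forall e, (forall w, S w -> (e %| w)%Z) -> (e %| d)%Z).

Definition lambda (w x : int) : R :=
  if (x \in Y) && (x + w \in Y) then q x (x + w) else 0.

Variable ws : int.

(* omega_+ = max_{w in Omega_+} w/omega_* (sup in \bar R: -oo if empty, +oo if unbounded) *)
Definition omega_plus : \bar R :=
  ereal_sup [set ((w %/ ws)%Z)%:~R%:E | w in Omega_plus].
(* omega_- = min_{w in Omega_-} w/omega_* (+oo if empty, -oo if unbounded) *)
Definition omega_minus : \bar R :=
  ereal_inf [set ((w %/ ws)%Z)%:~R%:E | w in Omega_minus].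

Definition A (j : int) : set int :=
  if j <= 0 then [set w | Omega_minus w /\ w < j * ws]
  else [set w | Omega_plus w /\ j * ws <= w].

Definition measure_on_Y (pi : int -> R) : Prop :=
  (forall x, 0 <= pi x) /\ (forall x, ~ Y x -> pi x = 0).

Definition probability_on_Y (pi : int -> R) : Prop :=
  measure_on_Y pi /\ (\esum_(x in Y) (pi x)%:E = 1)%E.

Definition master_equation (pi : int -> R) : Prop :=
  forall x, x \in Y ->
    (0 = \esum_(w in Omega) (lambda w (x - w) * pi (x - w))%:E
         - \esum_(w in Omega) (lambda w x * pi x)%:E)%E.

Definition stationary_measure (pi : int -> R) : Prop :=
  measure_on_Y pi /\ master_equation pi.
Definition stationary_distribution (pi : int -> R) : Prop :=
  probability_on_Y pi /\ master_equation pi.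

Definition flux2 (pi : int -> R) : Prop :=
  forall x : int, 0 <= x ->
    let L := \esum_(w in Omega_minus)
               \esum_(j in [set j : int | (w %/ ws)%Z + 1 <= j <= 0])
                 (lambda w (x - j * ws) * pi (x - j * ws))%:E in
    let Rh := \esum_(w in Omega_plus)
               \esum_(j in [set j : int | 1 <= j <= (w %/ ws)%Z])
                 (lambda w (x - j * ws) * pi (x - j * ws))%:E in
    (L = Rh /\ Rh < +oo)%E.

Definition flux3 (pi : int -> R) : Prop :=
  forall x : int, 0 <= x ->
    let L := \esum_(j in [set j : int | (omega_minus + 1 <= j%:~R%:E)%E /\ j <= 0])
               ((pi (x - j * ws))%:E *
                \esum_(w in A j) (lambda w (x - j * ws))%:E)%E in
    let Rh := \esum_(j in [set j : int | 1 <= j /\ (j%:~R%:E <= omega_plus)%E])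
               ((pi (x - j * ws))%:E *
                \esum_(w in A j) (lambda w (x - j * ws))%:E)%E in
    (L = Rh /\ Rh < +oo)%E.
End Defs.

(* Main.v *)
Require Import Defs.
From HB Require Import structures.
From mathcomp Require Import all_boot all_order all_algebra.
From mathcomp Require Import all_classical all_reals all_analysis.
From mathcomp Require Import zify ring lra.
Import Order.TTheory GRing.Theory Num.Theory.
Local Open Scope classical_set_scope.
Local Open Scope ring_scope.
Section EAr.
Local Open Scope ereal_scope.
Lemma fwd (R : realType) (C C' Od Ou Ia Ib : \bar R) :
  0 <= C -> 0 <= C' -> 0 <= Od -> 0 <= Ou -> 0 <= Ia -> 0 <= Ib ->
  C + Od = C' + Ib -> C' + Ib < +oo -> 0 = (Ia + Ib) - (Od + Ou) ->
  C + Ia = C' + Ou /\ C' + Ou < +oo.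
Proof.
case: C => [c||]//; case: C' => [c'||]//; case: Od => [d||]//;
case: Ou => [u||]//; case: Ia => [a||]//; case: Ib => [b||]// => /=.
rewrite ?lee_fin ?ltry -!EFinD => ?????? [E1] _ [E2]; split => //.
congr EFin; lra.
Qed.

Lemma bwd (R : realType) (C C' Od Ou Ia Ib : \bar R) :
  0 <= C -> 0 <= C' -> 0 <= Od -> 0 <= Ou -> 0 <= Ia -> 0 <= Ib ->
  C + Od = C' + Ib -> C' + Ib < +oo -> C + Ia = C' + Ou -> C' + Ou < +oo ->
  0 = (Ia + Ib) - (Od + Ou).
Proof.
case: C => [c||]//; case: C' => [c'||]//; case: Od => [d||]//;
case: Ou => [u||]//; case: Ia => [a||]//; case: Ib => [b||]// => /=.
rewrite ?lee_fin ?ltry -!EFinD => ?????? [E1] _ [E2] _.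
congr EFin; lra.
Qed.
End EAr.
Arguments fwd {R C C' Od Ou Ia Ib}.
Arguments bwd {R C C' Od Ou Ia Ib}.
Section Aux.
Local Open Scope ereal_scope.

Lemma Kd1 (R : realType) (h : int -> \bar R) (k x ws : int) : (k < 0)%R ->
  (forall z, 0 <= h z) ->
  \esum_(j in [set j : int | (k + 1 <= j <= 0)%R]) h (x - j * ws)%R =
  \esum_(j in [set j : int | (k + 1 <= j <= -1)%R]) h (x - j * ws)%R + h x.
Proof.
move=> k0 h0; rewrite (esumID [set 0%R]); last by move=> *.
have -> : [set j : int | (k + 1 <= j <= 0)%R] `&` [set 0%R] = [set 0%R].
  apply/seteqP; split => j /=; first by case.
  by move=> ->; split => //; apply/andP; split => //; lia.
have -> : [set j : int | (k + 1 <= j <= 0)%R] `&` ~` [set 0%R] =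
          [set j : int | (k + 1 <= j <= -1)%R].
  apply/seteqP; split => j /=.
    by case=> /andP[h1 h2] hj; apply/andP; split => //; lia.
  move=> /andP[h1 h2]; split; first by apply/andP; split; lia.
  by move=> hj; lia.
by rewrite esum_set1 // mul0r subr0 addeC.
Qed.

Lemma Kd2 (R : realType) (h : int -> \bar R) (k x ws : int) : (k < 0)%R ->
  (forall z, 0 <= h z) ->
  \esum_(j in [set j : int | (k + 1 <= j <= 0)%R]) h (x + ws - j * ws)%R =
  \esum_(j in [set j : int | (k + 1 <= j <= -1)%R]) h (x - j * ws)%R
   + h (x - k * ws)%R.
Proof.
move=> k0 h0.
rewrite (reindex_esum [set j : int | (k <= j <= -1)%R] _ (fun j => j + 1)%R).
  rewrite (eq_esum (b := fun j => h (x - j * ws)%R)); last first.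
    by move=> j _; congr h; ring.
  rewrite [LHS](esumID [set k]); last by move=> *.
  have -> : [set j : int | (k <= j <= -1)%R] `&` [set k] = [set k].
    apply/seteqP; split => j /=; first by case.
    by move=> ->; split => //; apply/andP; split => //; lia.
  have -> : [set j : int | (k <= j <= -1)%R] `&` ~` [set k] =
          [set j : int | (k + 1 <= j <= -1)%R].
    apply/seteqP; split => j /=.
      by case=> /andP[h1 h2] hj; apply/andP; split => //; lia.
    move=> /andP[h1 h2]; split; first by apply/andP; split; lia.
    by move=> hj; lia.
  by rewrite esum_set1 // addeC.
split.
- by move=> j /= /andP[h1 h2]; apply/andP; split; lia.
- by move=> i j _ _ /= hij; lia.
- move=> j /= /andP[h1 h2]; exists (j - 1)%R; last by ring.
  by apply/andP; split; lia.
Qed.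

Lemma Ku1 (R : realType) (h : int -> \bar R) (k x ws : int) : (0 < k)%R ->
  (forall z, 0 <= h z) ->
  \esum_(j in [set j : int | (1 <= j <= k)%R]) h (x - j * ws)%R =
  \esum_(j in [set j : int | (1 <= j <= k - 1)%R]) h (x - j * ws)%R
   + h (x - k * ws)%R.
Proof.
move=> k0 h0; rewrite (esumID [set k]); last by move=> *.
have -> : [set j : int | (1 <= j <= k)%R] `&` [set k] = [set k].
  apply/seteqP; split => j /=; first by case.
  by move=> ->; split => //; apply/andP; split => //; lia.
have -> : [set j : int | (1 <= j <= k)%R] `&` ~` [set k] =
          [set j : int | (1 <= j <= k - 1)%R].
  apply/seteqP; split => j /=.
    by case=> /andP[h1 h2] hj; apply/andP; split => //; lia.
  move=> /andP[h1 h2]; split; first by apply/andP; split; lia.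
  by move=> hj; lia.
by rewrite esum_set1 // addeC.
Qed.

Lemma Ku2 (R : realType) (h : int -> \bar R) (k x ws : int) : (0 < k)%R ->
  (forall z, 0 <= h z) ->
  \esum_(j in [set j : int | (1 <= j <= k)%R]) h (x + ws - j * ws)%R =
  \esum_(j in [set j : int | (1 <= j <= k - 1)%R]) h (x - j * ws)%R + h x.
Proof.
move=> k0 h0.
rewrite (reindex_esum [set j : int | (0 <= j <= k - 1)%R] _ (fun j => j + 1)%R).
  rewrite (eq_esum (b := fun j => h (x - j * ws)%R)); last first.
    by move=> j _; congr h; ring.
  rewrite [LHS](esumID [set 0%R]); last by move=> *.
  have -> : [set j : int | (0 <= j <= k - 1)%R] `&` [set 0%R] = [set 0%R].
    apply/seteqP; split => j /=; first by case.
    by move=> ->; split => //; apply/andP; split => //; lia.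
  have -> : [set j : int | (0 <= j <= k - 1)%R] `&` ~` [set 0%R] =
          [set j : int | (1 <= j <= k - 1)%R].
    apply/seteqP; split => j /=.
      by case=> /andP[h1 h2] hj; apply/andP; split => //; lia.
    move=> /andP[h1 h2]; split; first by apply/andP; split; lia.
    by move=> hj; lia.
  by rewrite esum_set1 // mul0r subr0 addeC.
split.
- by move=> j /= /andP[h1 h2]; apply/andP; split; lia.
- by move=> i j _ _ /= hij; lia.
- move=> j /= /andP[h1 h2]; exists (j - 1)%R; last by ring.
  by apply/andP; split; lia.
Qed.

End Aux.
Section Aux2.
Local Open Scope ereal_scope.

Lemma esumZ (R : realType) (T : choiceType) (A : set T) (a : T -> \bar R) (c : R) :
  (0 <= c)%R -> (forall i, A i -> 0 <= a i) ->
  (c%:E * (\esum_(i in A) a i) = \esum_(i in A) c%:E * a i)%E.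
Proof.
move=> c0 a0.
have H : forall b : T -> \bar R, (forall i, 0 <= b i) ->
    (c%:E * (\esum_(i in setT) b i) = \esum_(i in setT) c%:E * b i)%E.
  move=> b b0; rewrite /esum -ereal_supZl //; last first.
    apply/set0P; exists 0; exists set0; first exact: fsets_set0.
    by rewrite fsbig_set0.
  congr ereal_sup; apply/seteqP; split => y /=.
    by case=> _ [F hF <-] <-; exists F => //; rewrite ge0_mule_fsumr.
  case=> F hF <-; exists (\sum_(i \in F) b i); first by exists F.
  by rewrite ge0_mule_fsumr.
rewrite esum_mkcond [RHS]esum_mkcond H; last first.
  by move=> i; case: ifP => // /[!inE] /a0.
by apply: eq_esum => i _; case: ifP => //; rewrite mule0.
Qed.

Definition Hs (R : realType) (Y : set int) (q : int -> int -> R) (ws : int)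
  (pi : int -> R) : Prop :=
  [/\ Y `<=` [set x | (0 <= x)%R], rate_matrix Y q,
      is_gcd_set (Omega Y q) ws, (0 < ws)%R & measure_on_Y Y pi].

Lemma qxx_le0 (R : realType) (Y : set int) (q : int -> int -> R) x :
  rate_matrix Y q -> x \in Y -> (q x x <= 0)%R.
Proof.
move=> [h1 h2] xY; have := h2 x xY.
have : 0 <= \esum_(y in Y `\ x) (q x y)%:E.
  apply: esum_ge0 => y [yY ynx]; rewrite lee_fin; apply: h1 => //.
    by rewrite inE.
  by apply/eqP => e; apply: ynx; rewrite e.
by move=> /[swap] <-; rewrite lee_fin oppr_ge0.
Qed.

Lemma Omega_n0 (R : realType) (Y : set int) (q : int -> int -> R) w :
  rate_matrix Y q -> Omega Y q w -> w != 0%R.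
Proof.
move=> rm [x [y [xY yY qxy ->]]]; apply/eqP => e.
have exy : y = x by lia.
move: qxy; rewrite exy => qxx.
by have := @qxx_le0 R Y q x rm xY; rewrite leNgt qxx.
Qed.

Lemma lam_ge0 (R : realType) (Y : set int) (q : int -> int -> R) w z :
  rate_matrix Y q -> w != 0%R -> (0 <= lambda Y q w z)%R.
Proof.
move=> rm wn0; rewrite /lambda; case: ifP => // /andP[h1 h2].
apply: rm.1 => //; apply/eqP => e; move/eqP: wn0; apply; lia.
Qed.

Lemma F_ge0 (R : realType) (Y : set int) (q : int -> int -> R) pi w z :
  rate_matrix Y q -> measure_on_Y Y pi -> w != 0%R ->
  0 <= (lambda Y q w z * pi z)%:E.
Proof.
by move=> rm [p0 _] wn0; rewrite lee_fin mulr_ge0 //; apply: lam_ge0.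
Qed.

Lemma Omega_div (R : realType) (Y : set int) (q : int -> int -> R) ws w :
  is_gcd_set (Omega Y q) ws -> Omega Y q w -> ((w %/ ws)%Z * ws = w)%R.
Proof. by move=> [_ [h _]] hw; rewrite divzK //; apply: h. Qed.

Lemma Om_n0 (R : realType) (Y : set int) (q : int -> int -> R) w :
  Omega_minus Y q w -> w != 0%R.
Proof. by case=> _ h; lia. Qed.
Lemma Op_n0 (R : realType) (Y : set int) (q : int -> int -> R) w :
  Omega_plus Y q w -> w != 0%R.
Proof. by case=> _ h; lia. Qed.
End Aux2.
Arguments Om_n0 {R Y q w}.
Arguments Op_n0 {R Y q w}.
Arguments qxx_le0 {R Y q x}.
Arguments Omega_n0 {R Y q w}.
Arguments lam_ge0 {R Y q w z}.
Arguments F_ge0 {R Y q pi w z}.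
Arguments Omega_div {R Y q ws w}.
Section Dec.
Local Open Scope ereal_scope.
Variables (R : realType) (Y : set int) (q : int -> int -> R) (ws : int)
  (pi : int -> R).
Hypothesis (HY : Y `<=` [set x | (0 <= x)%R]) (rm : rate_matrix Y q)
  (hg : is_gcd_set (Omega Y q) ws) (ws0 : (0 < ws)%R) (mp : measure_on_Y Y pi).

Definition Dn2 (x : int) : \bar R :=
  \esum_(w in Omega_minus Y q)
     \esum_(j in [set j : int | ((w %/ ws)%Z + 1 <= j <= 0)%R])
        (lambda Y q w (x - j * ws) * pi (x - j * ws))%:E.
Definition Up2 (x : int) : \bar R :=
  \esum_(w in Omega_plus Y q)
     \esum_(j in [set j : int | (1 <= j <= (w %/ ws)%Z)%R])
        (lambda Y q w (x - j * ws) * pi (x - j * ws))%:E.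
Definition Inf (x : int) : \bar R :=
  \esum_(w in Omega Y q) (lambda Y q w (x - w) * pi (x - w))%:E.
Definition Outf (x : int) : \bar R :=
  \esum_(w in Omega Y q) (lambda Y q w x * pi x)%:E.
Definition Ia x := \esum_(w in Omega_minus Y q) (lambda Y q w (x - w) * pi (x - w))%:E.
Definition Ib x := \esum_(w in Omega_plus Y q) (lambda Y q w (x - w) * pi (x - w))%:E.
Definition Od x := \esum_(w in Omega_minus Y q) (lambda Y q w x * pi x)%:E.
Definition Ou x := \esum_(w in Omega_plus Y q) (lambda Y q w x * pi x)%:E.

Lemma flux2E : flux2 Y q ws pi <->
  (forall x, (0 <= x)%R -> Dn2 x = Up2 x /\ Up2 x < +oo).
Proof. by []. Qed.

Lemma masterE : master_equation Y q pi <->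
  (forall x, x \in Y -> 0 = Inf x - Outf x).
Proof. by []. Qed.

Let Fg w z : w != 0%R -> 0 <= (lambda Y q w z * pi z)%:E.
Proof. by move=> wn; apply: F_ge0. Qed.


Lemma dec_down x : exists C, 0 <= C /\ Dn2 x = C + Od x /\ Dn2 (x + ws) = C + Ia x.
Proof.
exists (\esum_(w in Omega_minus Y q)
     \esum_(j in [set j : int | ((w %/ ws)%Z + 1 <= j <= -1)%R])
        (lambda Y q w (x - j * ws) * pi (x - j * ws))%:E).
have kneg w : Omega_minus Y q w -> ((w %/ ws)%Z < 0)%R.
  move=> hw; have := Omega_div hg hw.1; case: hw => _ hw; nia.
split; last split.
- by apply: esum_ge0 => w hw; apply: esum_ge0 => j _; apply: Fg; exact: Om_n0 hw.
- rewrite /Dn2 /Od -esumD; first last.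
  + by move=> w hw; apply: Fg; exact: Om_n0 hw.
  + by move=> w hw; apply: esum_ge0 => j _; apply: Fg; exact: Om_n0 hw.
  apply: eq_esum => w hw.
  rewrite (@Kd1 R (fun z => (lambda Y q w z * pi z)%:E)) //; first exact: kneg.
  by move=> z; apply: Fg; exact: Om_n0 hw.
- rewrite /Dn2 /Ia -esumD; first last.
  + by move=> w hw; apply: Fg; exact: Om_n0 hw.
  + by move=> w hw; apply: esum_ge0 => j _; apply: Fg; exact: Om_n0 hw.
  apply: eq_esum => w hw.
  rewrite (@Kd2 R (fun z => (lambda Y q w z * pi z)%:E)) //; first last.
  + by move=> z; apply: Fg; exact: Om_n0 hw.
  + exact: kneg.
  by rewrite (Omega_div hg hw.1).
Qed.

Lemma dec_up x : exists C, 0 <= C /\ Up2 x = C + Ib x /\ Up2 (x + ws) = C + Ou x.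
Proof.
exists (\esum_(w in Omega_plus Y q)
     \esum_(j in [set j : int | (1 <= j <= (w %/ ws)%Z - 1)%R])
        (lambda Y q w (x - j * ws) * pi (x - j * ws))%:E).
have kpos w : Omega_plus Y q w -> (0 < (w %/ ws)%Z)%R.
  move=> hw; have := Omega_div hg hw.1; case: hw => _ hw; nia.
split; last split.
- by apply: esum_ge0 => w hw; apply: esum_ge0 => j _; apply: Fg; exact: Op_n0 hw.
- rewrite /Up2 /Ib -esumD; first last.
  + by move=> w hw; apply: Fg; exact: Op_n0 hw.
  + by move=> w hw; apply: esum_ge0 => j _; apply: Fg; exact: Op_n0 hw.
  apply: eq_esum => w hw.
  rewrite (@Ku1 R (fun z => (lambda Y q w z * pi z)%:E)) //; first last.
  + by move=> z; apply: Fg; exact: Op_n0 hw.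
  + exact: kpos.
  by rewrite (Omega_div hg hw.1).
- rewrite /Up2 /Ou -esumD; first last.
  + by move=> w hw; apply: Fg; exact: Op_n0 hw.
  + by move=> w hw; apply: esum_ge0 => j _; apply: Fg; exact: Op_n0 hw.
  apply: eq_esum => w hw.
  rewrite (@Ku2 R (fun z => (lambda Y q w z * pi z)%:E)) //; first exact: kpos.
  by move=> z; apply: Fg; exact: Op_n0 hw.
Qed.

End Dec.
Arguments Dn2 {R} Y q ws pi x.
Arguments Up2 {R} Y q ws pi x.
Arguments Inf {R} Y q pi x.
Arguments Outf {R} Y q pi x.
Arguments Ia {R} Y q pi x.
Arguments Ib {R} Y q pi x.
Arguments Od {R} Y q pi x.
Arguments Ou {R} Y q pi x.
Arguments dec_down {R Y q ws pi}.
Arguments dec_up {R Y q ws pi}.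
Section Main2.
Local Open Scope ereal_scope.
Variables (R : realType) (Y : set int) (q : int -> int -> R) (ws : int)
  (pi : int -> R).
Hypothesis (HY : Y `<=` [set x | (0 <= x)%R]) (rm : rate_matrix Y q)
  (hg : is_gcd_set (Omega Y q) ws) (ws0 : (0 < ws)%R) (mp : measure_on_Y Y pi).

Let Fg w z : w != 0%R -> 0 <= (lambda Y q w z * pi z)%:E.
Proof. by move=> wn; apply: F_ge0. Qed.

Lemma split_Om (f : int -> \bar R) :
  (forall w, Omega Y q w -> 0 <= f w) ->
  (\esum_(w in Omega Y q) f w) =
  (\esum_(w in Omega_minus Y q) f w) + (\esum_(w in Omega_plus Y q) f w).
Proof.
move=> f0; rewrite (esumID [set w | (w < 0)%R]) //; congr (_ + _).
congr esum; apply/seteqP; split => w /=.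
  case=> hw hn; split => //; have := Omega_n0 rm hw.
  by move: hn; rewrite /setC /= => hn hn0; apply/negP; lia.
by case=> hw hp; split => //; rewrite /setC /=; lia.
Qed.

Lemma InfE x : Inf Y q pi x = Ia Y q pi x + Ib Y q pi x.
Proof. by apply: split_Om => w hw; apply: Fg; apply: Omega_n0 hw. Qed.
Lemma OutfE x : Outf Y q pi x = Od Y q pi x + Ou Y q pi x.
Proof. by apply: split_Om => w hw; apply: Fg; apply: Omega_n0 hw. Qed.

Lemma master_all : master_equation Y q pi -> forall x, 0 = Inf Y q pi x - Outf Y q pi x.
Proof.
move=> me x; have [xY|xY] := boolP (x \in Y); first exact: me.
rewrite /Inf /Outf !esum1 ?sube0 // => w _.
  by rewrite mp.2 ?mulr0 //; move=> h; move/negP: xY; apply; rewrite inE.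
rewrite /lambda subrK; move/negbTE: xY => ->; by rewrite andbF mul0r.
Qed.

Lemma ge0_all x : [/\ 0 <= Ia Y q pi x, 0 <= Ib Y q pi x, 0 <= Od Y q pi x
  & 0 <= Ou Y q pi x].
Proof.
split; apply: esum_ge0 => w hw; apply: Fg;
  solve [apply: Om_n0 hw | apply: Op_n0 hw].
Qed.

Lemma lam_out z w : ~ Y z -> lambda Y q w z = 0%R.
Proof.
by move=> hz; rewrite /lambda; case: ifP => // /andP[h _]; exfalso; apply: hz; rewrite -inE.
Qed.

Lemma m2f : master_equation Y q pi ->
  forall x, Dn2 Y q ws pi x = Up2 Y q ws pi x /\ Up2 Y q ws pi x < +oo.
Proof.
move=> me.
suff H : forall n : nat, forall x, (x < n%:Z * ws + ws)%R ->
    Dn2 Y q ws pi x = Up2 Y q ws pi x /\ Up2 Y q ws pi x < +oo.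
  move=> x; apply: (H (absz x)); have hx : (x <= (absz x)%:Z)%R by lia.
  nia.
elim=> [|n IH] x hx.
  have -> : Dn2 Y q ws pi x = 0.
    apply: esum1 => w hw; apply: esum1 => j /= /andP[h1 h2].
    have e := Omega_div hg hw.1.
    rewrite /lambda; case: ifP; last by rewrite mul0r.
    move=> /andP[_ h]; move: h; rewrite inE => /HY /=.
    have : ((w %/ ws)%Z * ws + ws <= j * ws)%R.
      by rewrite -[X in (_ + X <= _)%R]mul1r -mulrDl ler_pM2r.
    move: hx; rewrite mul0r add0r => hx hle h0; exfalso; lia.
  have -> : Up2 Y q ws pi x = 0.
    apply: esum1 => w hw; apply: esum1 => j /= /andP[h1 h2].
    rewrite lam_out ?mul0r // => /HY /=.
    have : (ws <= j * ws)%R by rewrite -[X in (X <= _)%R]mul1r ler_pM2r.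
    move: hx; rewrite mul0r add0r => hx hle h0; lia.
  by split => //; rewrite ltry.
have [hlt|hge] := ltP x (n%:Z * ws + ws)%R; first exact: IH.
have hx' : (x - ws < n%:Z * ws + ws)%R.
  by move: hx; rewrite -addn1 PoszD mulrDl mul1r => hx; lia.
have [h1 h2] := IH (x - ws)%R hx'.
have [C [C0 [D1 D2]]] := dec_down rm hg ws0 mp (x - ws)%R.
have [C' [C'0 [U1 U2]]] := dec_up rm hg ws0 mp (x - ws)%R.
rewrite subrK in D2 U2; rewrite D2 U2.
have [g1 g2 g3 g4] := ge0_all (x - ws)%R.
apply: (fwd C0 C'0 g3 g4 g1 g2); first by rewrite -D1 -U1.
- by rewrite -U1.
- by have := master_all me (x - ws)%R; rewrite InfE OutfE.
Qed.

Lemma f2m : (forall x, (0 <= x)%R -> Dn2 Y q ws pi x = Up2 Y q ws pi x /\ Up2 Y q ws pi x < +oo) ->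
  master_equation Y q pi.
Proof.
move=> fl x xY; have x0 : (0 <= x)%R by apply: HY; rewrite -inE.
have [f1 f2] := fl x x0.
have [f3 f4] := fl (x + ws)%R ltac:(lia).
have [C [C0 [D1 D2]]] := dec_down rm hg ws0 mp x.
have [C' [C'0 [U1 U2]]] := dec_up rm hg ws0 mp x.
have [g1 g2 g3 g4] := ge0_all x.
change (0 = Inf Y q pi x - Outf Y q pi x).
rewrite InfE OutfE.
apply: (bwd C0 C'0 g3 g4 g1 g2).
- by rewrite -D1 -U1.
- by rewrite -U1.
- by rewrite -D2 -U2.
- by rewrite -U2.
Qed.

End Main2.
Section F3.
Local Open Scope ereal_scope.
Variables (R : realType) (Y : set int) (q : int -> int -> R) (ws : int)
  (pi : int -> R).
Hypothesis (rm : rate_matrix Y q)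
  (hg : is_gcd_set (Omega Y q) ws) (ws0 : (0 < ws)%R) (mp : measure_on_Y Y pi).

Definition L3 (x : int) : \bar R :=
  \esum_(j in [set j : int | (omega_minus Y q ws + 1 <= j%:~R%:E)%E /\ (j <= 0)%R])
     ((pi (x - j * ws))%:E * \esum_(w in A Y q ws j) (lambda Y q w (x - j * ws))%:E)%E.
Definition R3 (x : int) : \bar R :=
  \esum_(j in [set j : int | (1 <= j)%R /\ (j%:~R%:E <= omega_plus Y q ws)%E])
     ((pi (x - j * ws))%:E * \esum_(w in A Y q ws j) (lambda Y q w (x - j * ws))%:E)%E.

Lemma flux3E : flux3 Y q ws pi <->
  (forall x, (0 <= x)%R -> L3 x = R3 x /\ R3 x < +oo).
Proof. by []. Qed.

Lemma A_Om {j w} : A Y q ws j w -> Omega Y q w.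
Proof. by rewrite /A; case: ifP => _ [[h _] _]. Qed.

Lemma inner3 j x :
  ((pi (x - j * ws))%:E * (\esum_(w in A Y q ws j) (lambda Y q w (x - j * ws))%:E) =
  \esum_(w in A Y q ws j) (lambda Y q w (x - j * ws) * pi (x - j * ws))%:E)%E.
Proof.
rewrite esumZ; first by apply: eq_esum => w _; rewrite -EFinM mulrC.
- exact: mp.1.
- move=> w hw; rewrite lee_fin; apply: lam_ge0 => //.
  exact: Omega_n0 rm (A_Om hw).
Qed.

Lemma L3E x : L3 x = Dn2 Y q ws pi x.
Proof.
rewrite /L3 (eq_esum (fun j _ => inner3 j x)) esum_esum; last first.
  move=> j w _ hw; apply: F_ge0 => //; exact: Omega_n0 rm (A_Om hw).
rewrite /Dn2 esum_esum; last first.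
  move=> w j hw _; apply: F_ge0 => //; exact: Om_n0 hw.
rewrite [LHS](reindex_esum (Omega_minus Y q `*`` (fun w => [set j : int | ((w %/ ws)%Z + 1 <= j <= 0)%R])) _ (fun p => (p.2, p.1))) //.
split.
- move=> [w j] /= [hw /andP[h1 h2]]; have e := Omega_div hg hw.1; split => /=.
    split => //.
    have hle : omega_minus Y q ws <= ((w %/ ws)%Z)%:~R%:E.
      by apply: ereal_inf_lbound; exists w.
    apply: (le_trans (leeD2r 1 hle)).
    by rewrite -EFinD lee_fin -(intrD _ _ 1%R) ler_int.
  rewrite /A h2; split => //; case: hw => _ hw; nia.
- by move=> [a b] [c d] _ _ /= [-> ->].
- move=> [j w] /= [[hj1 hj2]]; rewrite /A hj2 => -[hw hlt].
  exists (w, j) => //=; split => //; apply/andP; split => //.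
  have e := Omega_div hg hw.1; case: hw => _ hw; nia.
Qed.

Lemma R3E x : R3 x = Up2 Y q ws pi x.
Proof.
rewrite /R3 (eq_esum (fun j _ => inner3 j x)) esum_esum; last first.
  move=> j w _ hw; apply: F_ge0 => //; exact: Omega_n0 rm (A_Om hw).
rewrite /Up2 esum_esum; last first.
  move=> w j hw _; apply: F_ge0 => //; exact: Op_n0 hw.
rewrite [LHS](reindex_esum (Omega_plus Y q `*`` (fun w => [set j : int | (1 <= j <= (w %/ ws)%Z)%R])) _ (fun p => (p.2, p.1))) //.
split.
- move=> [w j] /= [hw /andP[h1 h2]]; have e := Omega_div hg hw.1; split => /=.
    split => //.
    have hle : ((w %/ ws)%Z)%:~R%:E <= omega_plus Y q ws.
      by apply: ereal_sup_ubound; exists w.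
    apply: le_trans hle; by rewrite lee_fin ler_int.
  rewrite /A; have -> : (j <= 0)%R = false by lia.
  split => //; case: hw => _ hw; nia.
- by move=> [a b] [c d] _ _ /= [-> ->].
- move=> [j w] /= [[hj1 hj2]]; rewrite /A.
  have -> : (j <= 0)%R = false by lia.
  move=> -[hw hlt].
  exists (w, j) => //=; split => //; apply/andP; split => //.
  have e := Omega_div hg hw.1; case: hw => _ hw; nia.
Qed.

End F3.
Theorem theorem3p2 (R : realType) (Y : set int) (q : int -> int -> R) (ws : int)
  (pi : int -> R) :
  Y `<=` [set x | 0 <= x] ->
  rate_matrix Y q ->
  is_gcd_set (Omega Y q) ws -> 0 < ws ->
  measure_on_Y Y pi ->
  [/\ (stationary_measure Y q pi <-> measure_on_Y Y pi /\ flux2 Y q ws pi),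
      (stationary_measure Y q pi <-> measure_on_Y Y pi /\ flux3 Y q ws pi),
      (stationary_distribution Y q pi <-> probability_on_Y Y pi /\ flux2 Y q ws pi) &
      (stationary_distribution Y q pi <-> probability_on_Y Y pi /\ flux3 Y q ws pi)].
Proof.
move=> HY rm hg ws0 mp.
have M2 : master_equation Y q pi <-> flux2 Y q ws pi.
  split => [me|fl].
    by apply/(@flux2E R Y q ws pi) => x _; apply: (@m2f R Y q ws pi HY rm hg ws0 mp me x).
  by apply: (@f2m R Y q ws pi HY rm hg ws0 mp); apply/(@flux2E R Y q ws pi).
have F23 : flux2 Y q ws pi <-> flux3 Y q ws pi.
  split => h.
    apply/(@flux3E R Y q ws pi) => x x0; rewrite (@L3E R Y q ws pi rm hg ws0 mp) (@R3E R Y q ws pi rm hg ws0 mp).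
    exact: (proj1 (@flux2E R Y q ws pi) h x x0).
  apply/(@flux2E R Y q ws pi) => x x0; rewrite -(@L3E R Y q ws pi rm hg ws0 mp) -(@R3E R Y q ws pi rm hg ws0 mp).
  exact: (proj1 (@flux3E R Y q ws pi) h x x0).
rewrite /stationary_measure /stationary_distribution.
by split; tauto.
Qed.
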